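(* Let $H$ be a graph and $Y$ a minimal blocking set of $H$. Let $H'$ be obtained from $H$ by adding a new vertex $v$ adjacent exactly to the vertices of $Y$. Then $\mathrm{OPT}(H')=\mathrm{OPT}(H)+1$ and $Y\cup\{v\}$ is a minimal blocking set of $H'$.
   Context: $\mathrm{OPT}(G)$ is the minimum vertex cover size. $Y\subseteq V(G)$ is a blocking set of $G$ if no vertex cover of $G$ of size $\mathrm{OPT}(G)$ contains $Y$; minimal if no proper subset is a blocking set. *)

(* Defs.v *)
From mathcomp Require Import all_boot.
Set Implicit Arguments. Unset Strict Implicit. Unset Printing Implicit Defensive.

Definition simple_graph (T : finType) (e : rel T) : Prop :=
  symmetric e /\ irreflexive e.

Definition vertex_cover (T : finType) (e : rel T) (C : {set T}) : bool :=
  [forall x, forall y, e x y ==> (x \in C) || (y \in C)].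

Lemma vertex_cover_exists (T : finType) (e : rel T) :
  exists n, [exists C : {set T}, vertex_cover e C && (#|C| == n)].
Proof.
exists #|[set: T]|; apply/existsP; exists [set: T].
rewrite eqxx andbT; apply/forallP => x; apply/forallP => y.
by rewrite in_setT; apply/implyP.
Qed.

Definition OPT (T : finType) (e : rel T) : nat := ex_minn (vertex_cover_exists e).

Definition blocking (T : finType) (e : rel T) (Y : {set T}) : Prop :=
  forall C : {set T}, vertex_cover e C -> #|C| = OPT e -> ~ (Y \subset C).

Definition minimal_blocking (T : finType) (e : rel T) (Y : {set T}) : Prop :=
  blocking e Y /\ forall Z : {set T}, Z \proper Y -> ~ blocking e Z.

Definition add_vertex (T : finType) (e : rel T) (Y : {set T}) : rel (option T) :=
  fun a b => match a, b with
             | Some x, Some y => e x y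
             | None, Some y => y \in Y
             | Some x, None => x \in Y
             | None, None => false
             end.

(* Main.v *)
Require Import Defs.
From mathcomp Require Import all_boot.
Set Implicit Arguments. Unset Strict Implicit. Unset Printing Implicit Defensive.

Section H.
Variables (T : finType).

Lemma vcP (U : finType) (e : rel U) (C : {set U}) :
  vertex_cover e C <-> (forall x y, e x y -> x \in C \/ y \in C).
Proof.
split.
- move=> H x y exy; move: (forallP H x) => /forallP /(_ y) /implyP /(_ exy) /orP.
  by [].
- move=> H; apply/forallP => x; apply/forallP => y; apply/implyP => exy.
  by apply/orP; apply: H.
Qed.

Lemma OPT_min (U : finType) (e : rel U) (C : {set U}) : vertex_cover e C -> OPT e <= #|C|.
Proof.
move=> HC; rewrite /OPT; case: ex_minnP => m _ H; apply: H.
by apply/existsP; exists C; rewrite HC eqxx.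
Qed.

Lemma OPT_ex (U : finType) (e : rel U) : exists C, vertex_cover e C /\ #|C| = OPT e.
Proof.
rewrite /OPT; case: ex_minnP => m /existsP [C /andP [H1 /eqP H2]] _.
by exists C.
Qed.

Definition res (C : {set option T}) : {set T} := [set x | Some x \in C].
Definition lift (b : bool) (C : {set T}) : {set option T} :=
  if b then None |: Some @: C else Some @: C.

Lemma card_res (C : {set option T}) : #|C| = #|res C| + (None \in C).
Proof.
have E : C = lift (None \in C) (res C).
  apply/setP => [[x|]]; rewrite /lift; case: ifP => HN;
    rewrite ?in_setU1 ?(mem_imset _ _ Some_inj) ?inE /=.
  all: try by [].
  by apply/esym/negbTE; apply/imsetP => [[z _]].
rewrite {1}E /lift; case: ifP => _.
- rewrite cardsU1 card_imset; last exact: Some_inj.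
  have -> : None \notin Some @: res C by apply/imsetP => [[z _]].
  by rewrite addnC.
- by rewrite card_imset ?addn0; last exact: Some_inj.
Qed.

Lemma res_lift b (C : {set T}) : res (lift b C) = C.
Proof.
apply/setP => x; rewrite /res /lift inE; case: b;
  rewrite ?in_setU1 ?(mem_imset _ _ Some_inj) //.
Qed.

Lemma None_lift b (C : {set T}) : (None \in lift b C) = b.
Proof.
rewrite /lift; case: b; first by rewrite in_setU1 eqxx.
by apply/negbTE; apply/imsetP => [[z _]].
Qed.

Lemma Some_lift b (C : {set T}) x : (Some x \in lift b C) = (x \in C).
Proof. by rewrite -{2}(res_lift b C) inE. Qed.

Variables (e : rel T) (Y : {set T}).

Lemma res_vc (C : {set option T}) : vertex_cover (add_vertex e Y) C -> vertex_cover e (res C).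
Proof.
move/vcP => H; apply/vcP => x y exy; rewrite !inE; exact: (H (Some x) (Some y)).
Qed.

Lemma res_Y (C : {set option T}) : vertex_cover (add_vertex e Y) C -> None \notin C -> Y \subset res C.
Proof.
move/vcP => H HN; apply/subsetP => y Hy; rewrite inE.
by case: (H None (Some y) Hy) => // HN'; rewrite HN' in HN.
Qed.

Lemma lift_vc b (C : {set T}) : vertex_cover e C -> (b || (Y \subset C)) ->
  vertex_cover (add_vertex e Y) (lift b C).
Proof.
move/vcP => H Hb; apply/vcP => [[x|] [y|]] exy; rewrite /= in exy => //.
- by rewrite !Some_lift; apply: H.
- case: b Hb => Hb; first by right; rewrite None_lift.
  by left; rewrite /= in Hb; rewrite Some_lift (subsetP Hb).
- case: b Hb => Hb; first by left; rewrite None_lift.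
  by right; rewrite /= in Hb; rewrite Some_lift (subsetP Hb).
Qed.

End H.

Theorem mainTheorem14 (T : finType) (e : rel T) (Y : {set T}) :
  simple_graph e ->
  minimal_blocking e Y ->
  OPT (add_vertex e Y) = (OPT e).+1 /\
  minimal_blocking (add_vertex e Y) (None |: [set Some y | y in Y]).
Proof.
move=> _ [Hb Hm].
set k := OPT e.
have Hy : forall y, y \in Y -> exists C, [/\ vertex_cover e C, #|C| = k & Y :\ y \subset C].
  move=> y Hy.
  case: (boolP [exists C, [&& vertex_cover e C, #|C| == k & Y :\ y \subset C]]).
    by move/existsP => [C /and3P [H1 /eqP H2 H3]]; exists C.
  move/existsPn => H; exfalso; apply: (Hm (Y :\ y)); first exact: properD1.
  by move=> C H1 H2 H3; move: (H C); rewrite H1 H2 eqxx H3.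
have [C0 [HC0 HC0k]] := OPT_ex e.
have Hopt : OPT (add_vertex e Y) = k.+1.
  apply/eqP; rewrite eqn_leq; apply/andP; split.
    have := OPT_min (lift_vc HC0 (isT : true || (Y \subset C0))).
    by rewrite card_res res_lift None_lift HC0k addn1.
  have [C' [HC' <-]] := OPT_ex (add_vertex e Y).
  rewrite card_res; have Hr := OPT_min (res_vc HC').
  case: (boolP (None \in C')) => HN; first by rewrite addn1.
  rewrite addn0 ltn_neqAle Hr andbT; apply/eqP => Heq.
  apply: (Hb (res C') (res_vc HC')); first by rewrite -Heq.
  exact: (res_Y HC' HN).
split => //; split.
  move=> C' HC' Hc Hsub; apply: (Hb (res C') (res_vc HC')).
    by move: Hc; rewrite card_res Hopt (subsetP Hsub None (setU11 _ _)) addn1 => -[].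
  apply/subsetP => y Hy'; rewrite inE; apply: (subsetP Hsub).
  by rewrite in_setU1 (mem_imset _ _ Some_inj) Hy' orbT.
move=> Z /properP [HZ [w Hw HwZ]] Hbl.
have Yne : exists y, y \in Y.
  case: (set_0Vmem Y) => [HY|]; last by move=> [y Hy']; exists y.
  by exfalso; apply: (Hb C0 HC0 HC0k); rewrite HY sub0set.
case: w Hw HwZ => [y|] Hw HwZ.
- have Hy' : y \in Y.
    by move: Hw; rewrite in_setU1 /= (mem_imset _ _ Some_inj).
  have [C [H1 H2 H3]] := Hy y Hy'.
  have HYC : Y \subset C :|: [set y].
    apply/subsetP => z Hz; rewrite in_setU in_set1; case: (eqVneq z y) => Hzy; rewrite ?orbT //=.
    by rewrite ?orbF (subsetP H3) // in_setD1 Hzy.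
  apply: (Hbl (lift true C)).
  - apply: lift_vc => //.
  - by rewrite card_res res_lift None_lift H2 Hopt addn1.
  apply/subsetP => [[z|] Hz]; last by rewrite None_lift.
  have : Some z \in None |: [set Some y | y in Y] by apply: (subsetP HZ).
  rewrite in_setU1 /= (mem_imset _ _ Some_inj) => Hz'.
  rewrite /lift in_setU1 (mem_imset _ _ Some_inj) /=.
  rewrite (subsetP H3) // in_setD1 Hz' andbT; apply/eqP => Ezy.
  by subst z; rewrite Hz in HwZ.
- have [y Hy'] := Yne.
  have [C [H1 H2 H3]] := Hy y Hy'.
  have HYC : Y \subset y |: C.
    apply/subsetP => z Hz; rewrite in_setU1; case: (eqVneq z y) => //= Hzy.
    by rewrite (subsetP H3) // in_setD1 Hzy.
  apply: (Hbl (lift false (y |: C))).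
  - by apply: lift_vc => //=; apply/vcP => a b eab; case: ((proj1 (vcP _ _)) H1 a b eab) => H;
      [left|right]; rewrite in_setU1 H orbT.
  - rewrite card_res res_lift None_lift addn0 cardsU1 H2 Hopt.
    suff -> : y \notin C by [].
    apply/negP => HyC; apply: (Hb C H1 H2); apply/subsetP => z Hz.
    case: (eqVneq z y) => [->//|Hzy]; by rewrite (subsetP H3) // in_setD1 Hzy.
  apply/subsetP => [[z|] Hz]; last by rewrite Hz in HwZ.
  have : Some z \in None |: [set Some y | y in Y] by apply: (subsetP HZ).
  rewrite in_setU1 /= (mem_imset _ _ Some_inj) => Hz'.
  by rewrite /lift (mem_imset _ _ Some_inj) (subsetP HYC).
Qed.
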